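(* Let $\Gamma$ be a finite connected $(G,2)$-distance-transitive graph of square-free order, where $G$ is soluble, and let $F$ be the Fitting subgroup of $G$. If $|F|$ is square-free, then $F=C_G(F)$ is cyclic, and either $\Gamma\cong \mathrm{K}_{m[b]}$ with $m\ge3$, $b\ge2$ and $mb$ square-free, or $F$ is semiregular on $V(\Gamma)$ with at most $2$ orbits.
   Context: For $G\le\mathrm{Aut}(\Gamma)$, $\Gamma$ is $(G,2)$-distance-transitive if its diameter is at least $2$, $G$ is vertex-transitive and $G_u$ is transitive on $\Gamma(u)$ and $\Gamma_2(u)$ for every vertex $u$. The Fitting subgroup is the subgroup generated by all nilpotent normal subgroups. $\mathrm{K}_{m[b]}$ is the complete multipartite graph with $m$ parts of size $b$. *)

(* Defs.v *)
From mathcomp Require Import all_boot all_order all_fingroup all_solvable.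
Set Implicit Arguments. Unset Strict Implicit. Unset Printing Implicit Defensive.
Open Scope group_scope.

Definition simple_graph {V : finType} (e : rel V) : Prop :=
  symmetric e /\ irreflexive e.

Definition connected_graph {V : finType} (e : rel V) : Prop :=
  forall x y : V, connect e x y.

Definition squarefree (n : nat) : Prop :=
  0 < n /\ forall p : nat, prime p -> ~~ (p ^ 2 %| n).

Definition graph_aut_group {V : finType} (e : rel V) (G : {group {perm V}}) : Prop :=
  forall g, g \in G -> forall x y : V, e (g x) (g y) = e x y.

Definition nbhd {V : finType} (e : rel V) (u : V) : {set V} :=
  [set v | e u v].
Definition nbhd2 {V : finType} (e : rel V) (u : V) : {set V} :=
  [set v | [&& v != u, ~~ e u v & [exists w, e u w && e w v]]].

Definition diam_ge2 {V : finType} (e : rel V) : Prop :=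
  exists u v : V, v != u /\ ~~ e u v.

Definition two_distance_transitive {V : finType} (e : rel V)
    (G : {group {perm V}}) : Prop :=
  [/\ diam_ge2 e,
      [transitive G, on [set: V] | 'P] &
      forall u : V,
        [transitive 'C_G[u | 'P], on nbhd e u | 'P] /\
        [transitive 'C_G[u | 'P], on nbhd2 e u | 'P]].

Definition iso_complete_multipartite {V : finType} (e : rel V) (m b : nat) : Prop :=
  exists f : V -> 'I_m * 'I_b,
    bijective f /\ forall x y : V, e x y = ((f x).1 != (f y).1).

Definition semiregular_act {V : finType} (H : {set {perm V}}) : Prop :=
  forall v : V, 'C_H[v | 'P] = 1%g.

Definition num_orbits {V : finType} (H : {set {perm V}}) : nat :=
  #|orbit 'P H @: [set: V]|.

(* Main.v *)
Require Import Defs.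
From mathcomp Require Import all_boot all_order all_fingroup all_solvable.
Local Open Scope group_scope.
Lemma cent_Fitting_sub (gT : finGroupType) (G : {group gT}) :
  solvable G -> 'C_G('F(G)) \subset 'F(G).
Proof.
move=> solG.
have nFG : G \subset 'N('F(G)) := normal_norm (Fitting_normal G).
have nCG : 'C_G('F(G)) <| G.
  by have := subcent_normal G 'F(G); rewrite (setIidPl nFG).
have solC : solvable 'C_G('F(G)) := solvableS (subsetIl _ _) solG.
have step n : ('C_G('F(G)))^`(n.+1) \subset 'F(G) ->
              ('C_G('F(G)))^`(n) \subset 'F(G).
  move=> sD1F.
  have nDG : ('C_G('F(G)))^`(n) <| G := char_normal_trans (der_char n _) nCG.
  apply: Fitting_max nDG _.
  apply: small_nil_class; apply: (@leq_trans 2) => //; rewrite nil_class2.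
  rewrite subsetI der_sub /=.
  apply: subset_trans sD1F _; rewrite centsC.
  apply: subset_trans (der_sub n _) _; exact: subsetIr.
have gen k n : ('C_G('F(G)))^`(k + n) \subset 'F(G) ->
               ('C_G('F(G)))^`(n) \subset 'F(G).
  elim: k n => // k IH n; rewrite addSnnS => /IH; exact: step.
have [m Cm1] := derivedP _ solC.
by apply: (gen m 0); rewrite addn0 Cm1 sub1G.
Qed.

Lemma sqf_nil_cyclic (gT : finGroupType) (F : {group gT}) :
  nilpotent F -> (forall p, prime p -> ~~ (p ^ 2 %| #|F|)%N) -> cyclic F.
Proof.
move=> nilF sqf; apply: nil_Zgroup_cyclic => //.
apply/forall_inP => P /SylowP[p p_pr sylP].
have pP := pHall_pgroup sylP.
case: (eqVneq P 1%G) => [-> | ntP]; first exact: cyclic1.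
have [_ pdiv [m cardP]] := pgroup_pdiv pP ntP.
apply: prime_cyclic; rewrite cardP.
case: m cardP => // m cardP.
have : (p ^ 2 %| #|F|)%N.
  apply: dvdn_trans (cardSg (pHall_sub sylP)).
  by rewrite cardP (dvdn_exp2l p (_ : 2 <= m.+2)%N).
by rewrite (negPf (sqf p p_pr)).
Qed.

Theorem lemma4p5 (V : finType) (e : rel V) (G : {group {perm V}}) :
  simple_graph e ->
  connected_graph e ->
  graph_aut_group e G ->
  two_distance_transitive e G ->
  squarefree #|V| ->
  solvable G ->
  squarefree #|'F(G)| ->
  [/\ 'C_G('F(G)) = 'F(G)%g,
      cyclic 'F(G) &
      (exists m b : nat,
          [/\ 3 <= m, 2 <= b, squarefree (m * b) & iso_complete_multipartite e m b])
      \/ (semiregular_act ('F(G)) /\ num_orbits ('F(G)) <= 2)].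
Proof.
move=> [esym eirr] conn autG [[a [b [ba nab]]] trG trLoc] _ solG [_ sqF].
have sCF := @cent_Fitting_sub _ G solG.
have cycF := @sqf_nil_cyclic _ _ (Fitting_nil G) sqF.
have CFeq : 'C_G('F(G)) = 'F(G).
  apply/eqP; rewrite eqEsubset sCF subsetI Fitting_sub /=.
  exact: cyclic_abelian cycF.
split => //; right.
have nFG : G \subset 'N('F(G)) := normal_norm (Fitting_normal G).
have commF g h : g \in G -> h \in G -> [~ h, g] \in 'F(G).
  move=> Gg Gh; rewrite -CFeq inE groupR //= -ker_conj_aut.
  have nh := subsetP nFG h Gh; have ng := subsetP nFG g Gg.
  apply/kerP; first by rewrite groupR.
  rewrite morphR //; apply/eqP/commgP.
  have abA := Aut_cyclic_abelian cycF.
  have AutI x : x \in G -> conj_aut 'F(G) x \in Aut 'F(G).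
    move=> Gx; apply: (subsetP (Aut_conj_aut _ G)).
    by apply: mem_morphim => //; apply: (subsetP nFG).
  by apply: (centsP abA); apply: AutI.
have key w g x : g \in 'C_G[w | 'P] -> aperm x g \in orbit 'P 'F(G) x.
  move=> /setIP[Gg /astab1P gw].
  have: x \in orbit 'P G w by rewrite (atransP trG) ?inE.
  case/orbitP => h Gh <-.
  rewrite -actM (commgC h g) [in X in X \in _]actM (actM _ w g h) gw.
  exact: mem_orbit (commF g h Gg Gh).
have nbr w y y' : e w y -> e w y' -> y' \in orbit 'P 'F(G) y.
  move=> wy wy'; have [trN _] := trLoc w.
  have: y' \in orbit 'P 'C_G[w | 'P] y by rewrite (atransP trN) ?inE.
  case/orbitP => g Cg <-; exact: key Cg.
have [v av] : exists v, e a v.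
  have := conn a b; case/connectP => p.
  case: p => [_ /= eba | y p] /=; first by rewrite eba eqxx in ba.
  by case/andP => ay _ _; exists y.
pose S := orbit 'P 'F(G) a :|: orbit 'P 'F(G) v.
have one x y : e x y -> x \in S -> y \in S.
  move=> xy /setUP[] /orbitP[f Ff ex]; subst x.
    have Gf := subsetP (Fitting_sub G) f Ff.
    have e2 : e (aperm a f) (aperm v f) by rewrite !apermE autG.
    apply/setUP; right; apply: orbit_trans (nbr _ _ _ e2 xy) _.
    exact: mem_orbit.
  have Gf := subsetP (Fitting_sub G) f Ff.
  have e2 : e (aperm v f) (aperm a f) by rewrite !apermE autG // esym.
  apply/setUP; left; apply: orbit_trans (nbr _ _ _ e2 xy) _.
  exact: mem_orbit.
have closS : closed e (mem S).
  move=> x y xy; apply/idP/idP; first exact: one.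
  by apply: one; rewrite esym.
have allS x : x \in S.
  by rewrite -(closed_connect closS (conn a x)) inE orbit_refl.
split.
  move=> w; apply/trivgP/subsetP => k /setIP[Fk Ck]; rewrite inE.
  apply/eqP/permP => x; rewrite perm1.
  have: x \in orbit 'P G w by rewrite (atransP trG) ?inE.
  case/orbitP => g Gg <-.
  have eqK : 'C_('F(G))[w | 'P] :^ g = 'C_('F(G))[w | 'P].
    apply/eqP; rewrite -/(('C_('F(G))[w | 'P] :^ g)%G == 'C_('F(G))[w | 'P]%G).
    rewrite (eq_subG_cyclic cycF) ?cardJg //= ?subsetIl //.
    by rewrite conjIg (normsP nFG g Gg) subsetIl.
  have : k \in 'C_('F(G))[w | 'P] :^ g by rewrite eqK inE Fk.
  rewrite conjIg -astab1_act => /setIP[_ /astab1P].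
  by [].
rewrite /num_orbits.
apply: (@leq_trans #|[set orbit 'P 'F(G) a; orbit 'P 'F(G) v]|).
  apply: subset_leq_card; apply/subsetP => O /imsetP[x _ ->].
  by rewrite !inE; case/setUP: (allS x) => /orbit_eqP ->; rewrite eqxx ?orbT.
by rewrite cards2; case: (_ != _).
Qed.
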